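(* Let $W(D_4)\subset \mathrm{O}_4(\mathbb R)$ be the group of matrices $D\cdot P(\pi)$ with $D=\mathrm{diag}(\varepsilon_1,\dots,\varepsilon_4)$, $\varepsilon_i=\pm1$, $\prod_i\varepsilon_i=1$, and $P(\pi)$ the permutation matrix of $\pi\in\mathfrak S_4$. Let $$\mu=\tfrac12\begin{pmatrix}1&1&1&-1\\1&1&-1&1\\1&-1&1&1\\1&-1&-1&-1\end{pmatrix},\qquad \rho=\tfrac12\begin{pmatrix}-1&1&1&1\\-1&-1&1&-1\\-1&-1&-1&1\\-1&1&-1&-1\end{pmatrix},$$ and let $\tilde\mu,\tilde\rho$ be the automorphisms of $W(D_4)$ given by $x\mapsto\mu x\mu^{-1}$ and $x\mapsto\rho x\rho^{-1}$. Then every trialitarian automorphism of $W(D_4)$ is conjugate in the group $\mathrm{Aut}(W(D_4))$ to either $\tilde\mu$ or $\tilde\rho$.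
   Context: A trialitarian automorphism of $W(D_4)$ is an automorphism of order $3$ which is not inner. Conjugation by $\mu$ and by $\rho$ normalizes $W(D_4)$, and $\tilde\mu,\tilde\rho$ are trialitarian. *)

(* Defs.v *)
From mathcomp Require Import all_boot all_order all_algebra all_fingroup.
Set Implicit Arguments. Unset Strict Implicit. Unset Printing Implicit Defensive.
Import GRing.Theory Num.Theory.
Local Open Scope ring_scope.

Definition sgnb (R : numFieldType) (b : bool) : R := if b then -1 else 1.

Definition inWD4 (R : numFieldType) (M : 'M[R]_4) : Prop :=
  exists (s : {ffun 'I_4 -> bool}) (p : 'S_4),
    \prod_(i < 4) sgnb R (s i) = 1 /\
    M = diag_mx (\row_(i < 4) sgnb R (s i)) *m perm_mx p.

Definition autWD4 (R : numFieldType) (f : 'M[R]_4 -> 'M[R]_4) : Prop :=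
  [/\ (forall x, inWD4 x -> inWD4 (f x)),
      (forall x y, inWD4 x -> inWD4 y -> f (x *m y) = f x *m f y),
      (forall x y, inWD4 x -> inWD4 y -> f x = f y -> x = y)
    & (forall y, inWD4 y -> exists2 x, inWD4 x & f x = y)].

Definition innerWD4 (R : numFieldType) (f : 'M[R]_4 -> 'M[R]_4) : Prop :=
  exists2 g, inWD4 g & forall x, inWD4 x -> f x = g *m x *m invmx g.

Definition trialitarian (R : numFieldType) (f : 'M[R]_4 -> 'M[R]_4) : Prop :=
  [/\ autWD4 f,
      (forall x, inWD4 x -> f (f (f x)) = x),
      ~ (forall x, inWD4 x -> f x = x)
    & ~ innerWD4 f].

Definition mat4 (R : numFieldType) (l : seq (seq int)) : 'M[R]_4 :=
  \matrix_(i < 4, j < 4) ((nth 0 (nth [::] l i) j)%:~R / 2).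

Definition muD4 (R : numFieldType) : 'M[R]_4 :=
  mat4 R [:: [:: 1; 1; 1; -1]; [:: 1; 1; -1; 1]; [:: 1; -1; 1; 1]; [:: 1; -1; -1; -1]].

Definition rhoD4 (R : numFieldType) : 'M[R]_4 :=
  mat4 R [:: [:: -1; 1; 1; 1]; [:: -1; -1; 1; -1]; [:: -1; -1; -1; 1]; [:: -1; 1; -1; -1]].

Definition conjm (R : numFieldType) (m : 'M[R]_4) (x : 'M[R]_4) : 'M[R]_4 :=
  m *m x *m invmx m.

Definition conj_in_Aut (R : numFieldType) (f g : 'M[R]_4 -> 'M[R]_4) : Prop :=
  exists a, autWD4 a /\ forall x, inWD4 x -> a (f x) = g (a x).

(* Main.v *)
Require Import Defs.
From mathcomp Require Import all_boot all_order all_algebra all_fingroup.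
From mathcomp Require Import ring lra zify.
Set Implicit Arguments. Unset Strict Implicit. Unset Printing Implicit Defensive.
Import GRing.Theory Num.Theory.

Definition code := seq nat.
Definition fm (x : nat) (b : code) : nat :=
  let y := nth 0 b (x %% 4) in y %% 4 + 4 * ((4 <= x) (+) (4 <= y)).
Definition cmul (a b : code) : code := [seq fm x b | x <- a].
Definition one : code := [:: 0; 1; 2; 3].
Definition gen (a1 a2 : code) (b : bool) := if b then a2 else a1.
Definition evalw (a1 a2 : code) (w : seq bool) : code :=
  foldl (fun x b => cmul x (gen a1 a2 b)) one w.
Definition Gl : seq code := [:: [:: 0; 1; 2; 3];
  [:: 0; 5; 3; 6];
  [:: 1; 2; 0; 3];
  [:: 0; 1; 6; 7];
  [:: 1; 6; 3; 4];
  [:: 5; 3; 0; 6];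
  [:: 2; 0; 1; 3];
  [:: 0; 5; 7; 2];
  [:: 1; 2; 4; 7];
  [:: 5; 7; 6; 4];
  [:: 2; 4; 3; 5];
  [:: 1; 6; 0; 7];
  [:: 6; 3; 1; 4];
  [:: 3; 0; 5; 6];
  [:: 1; 6; 7; 0];
  [:: 5; 3; 4; 2];
  [:: 2; 0; 5; 7];
  [:: 1; 2; 7; 4];
  [:: 6; 7; 4; 5];
  [:: 3; 4; 6; 1];
  [:: 5; 7; 0; 2];
  [:: 2; 4; 1; 7];
  [:: 7; 6; 5; 4];
  [:: 4; 3; 2; 5];
  [:: 6; 0; 1; 7];
  [:: 3; 1; 6; 4];
  [:: 5; 7; 2; 0];
  [:: 2; 4; 7; 1];
  [:: 1; 6; 4; 3];
  [:: 6; 3; 5; 0];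
  [:: 3; 0; 1; 2];
  [:: 5; 3; 2; 4];
  [:: 2; 0; 7; 5];
  [:: 7; 2; 4; 1];
  [:: 4; 7; 5; 6];
  [:: 6; 4; 7; 5];
  [:: 3; 5; 4; 2];
  [:: 6; 7; 1; 0];
  [:: 3; 4; 5; 2];
  [:: 0; 5; 2; 7];
  [:: 2; 7; 1; 4];
  [:: 7; 4; 6; 5];
  [:: 4; 6; 3; 1];
  [:: 7; 0; 5; 2];
  [:: 4; 1; 2; 7];
  [:: 6; 5; 7; 4];
  [:: 3; 2; 4; 5];
  [:: 1; 2; 3; 0];
  [:: 6; 7; 0; 1];
  [:: 3; 4; 2; 5];
  [:: 5; 7; 4; 6];
  [:: 2; 4; 5; 3];
  [:: 7; 6; 1; 0];
  [:: 4; 3; 6; 1];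
  [:: 6; 0; 5; 3];
  [:: 3; 1; 2; 0];
  [:: 6; 3; 0; 5];
  [:: 3; 0; 2; 1];
  [:: 0; 1; 7; 6];
  [:: 2; 3; 4; 5];
  [:: 4; 2; 1; 7];
  [:: 7; 4; 2; 1];
  [:: 4; 5; 7; 6];
  [:: 6; 1; 4; 3];
  [:: 3; 6; 5; 0];
  [:: 7; 2; 5; 0];
  [:: 4; 7; 2; 1];
  [:: 6; 4; 1; 3];
  [:: 3; 5; 6; 0];
  [:: 0; 1; 3; 2];
  [:: 3; 2; 5; 4];
  [:: 0; 7; 2; 5];
  [:: 7; 5; 4; 6];
  [:: 4; 7; 6; 5];
  [:: 5; 4; 3; 2];
  [:: 7; 1; 6; 0];
  [:: 4; 5; 3; 2];
  [:: 5; 2; 0; 7];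
  [:: 7; 1; 2; 4];
  [:: 4; 6; 7; 5];
  [:: 6; 3; 4; 1];
  [:: 5; 3; 6; 0];
  [:: 2; 0; 3; 1];
  [:: 7; 2; 0; 5];
  [:: 4; 7; 1; 2];
  [:: 6; 4; 3; 1];
  [:: 3; 5; 0; 6];
  [:: 6; 7; 5; 4];
  [:: 3; 4; 1; 6];
  [:: 0; 5; 6; 3];
  [:: 2; 7; 5; 0];
  [:: 7; 0; 1; 6];
  [:: 4; 1; 6; 3];
  [:: 6; 5; 3; 0];
  [:: 3; 2; 0; 1];
  [:: 7; 6; 0; 1];
  [:: 4; 3; 1; 6];
  [:: 6; 0; 3; 5];
  [:: 3; 1; 0; 2];
  [:: 3; 6; 4; 1];
  [:: 0; 3; 5; 6];
  [:: 4; 3; 5; 2];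
  [:: 5; 0; 2; 7];
  [:: 7; 5; 0; 2];
  [:: 5; 6; 7; 4];
  [:: 4; 2; 5; 3];
  [:: 2; 3; 1; 0];
  [:: 7; 0; 6; 1];
  [:: 4; 2; 3; 5];
  [:: 7; 4; 5; 6];
  [:: 4; 5; 2; 3];
  [:: 6; 1; 7; 0];
  [:: 3; 0; 6; 5];
  [:: 0; 2; 3; 1];
  [:: 1; 7; 0; 6];
  [:: 2; 1; 4; 7];
  [:: 4; 2; 7; 1];
  [:: 1; 4; 6; 3];
  [:: 2; 5; 7; 0];
  [:: 5; 6; 3; 0];
  [:: 1; 3; 0; 2];
  [:: 2; 5; 3; 4];
  [:: 5; 4; 7; 6];
  [:: 7; 6; 4; 5];
  [:: 2; 3; 0; 1];
  [:: 6; 1; 0; 7];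
  [:: 3; 6; 1; 4];
  [:: 7; 2; 1; 4];
  [:: 6; 4; 5; 7];
  [:: 3; 5; 2; 4];
  [:: 3; 2; 1; 0];
  [:: 0; 7; 6; 1];
  [:: 5; 2; 4; 3];
  [:: 2; 7; 0; 5];
  [:: 7; 4; 1; 2];
  [:: 4; 6; 5; 7];
  [:: 4; 1; 3; 6];
  [:: 6; 5; 0; 3];
  [:: 0; 6; 1; 7];
  [:: 1; 3; 6; 4];
  [:: 4; 6; 1; 3];
  [:: 1; 0; 3; 2];
  [:: 2; 1; 0; 3];
  [:: 1; 7; 2; 4];
  [:: 5; 0; 6; 3];
  [:: 0; 3; 2; 1];
  [:: 7; 1; 4; 2];
  [:: 5; 0; 3; 6];
  [:: 7; 5; 6; 4];
  [:: 5; 6; 0; 3];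
  [:: 7; 5; 2; 0];
  [:: 6; 0; 7; 1];
  [:: 3; 1; 4; 6];
  [:: 0; 3; 6; 5];
  [:: 0; 2; 5; 7];
  [:: 5; 0; 7; 2];
  [:: 2; 5; 4; 3];
  [:: 0; 6; 7; 1];
  [:: 1; 7; 6; 0];
  [:: 0; 6; 3; 5];
  [:: 1; 4; 2; 7];
  [:: 2; 7; 4; 1];
  [:: 3; 6; 0; 5];
  [:: 0; 3; 1; 2];
  [:: 2; 3; 5; 4];
  [:: 7; 0; 2; 5];
  [:: 4; 5; 6; 7];
  [:: 6; 1; 3; 4];
  [:: 0; 2; 7; 5];
  [:: 1; 7; 4; 2];
  [:: 1; 3; 4; 6];
  [:: 0; 7; 1; 6];
  [:: 5; 4; 6; 7];
  [:: 5; 2; 3; 4];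
  [:: 7; 1; 0; 6];
  [:: 0; 7; 5; 2];
  [:: 5; 4; 2; 3];
  [:: 2; 1; 3; 0];
  [:: 0; 2; 1; 3];
  [:: 1; 0; 7; 6];
  [:: 1; 0; 6; 7];
  [:: 2; 1; 7; 4];
  [:: 4; 1; 7; 2];
  [:: 6; 5; 4; 7];
  [:: 1; 0; 2; 3];
  [:: 0; 6; 5; 3];
  [:: 1; 4; 7; 2];
  [:: 5; 2; 7; 0];
  [:: 1; 4; 3; 6];
  [:: 2; 5; 0; 7];
  [:: 1; 3; 2; 0];
  [:: 5; 6; 4; 7]].
Definition Wd : seq (seq bool) := [:: [:: ];
  [:: false];
  [:: true];
  [:: false; false];
  [:: false; true];
  [:: true; false];
  [:: true; true];
  [:: false; false; false];
  [:: false; false; true];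
  [:: false; true; false];
  [:: false; true; true];
  [:: true; false; false];
  [:: true; false; true];
  [:: true; true; false];
  [:: false; false; false; true];
  [:: false; false; true; false];
  [:: false; false; true; true];
  [:: false; true; false; false];
  [:: false; true; false; true];
  [:: false; true; true; false];
  [:: true; false; false; false];
  [:: true; false; false; true];
  [:: true; false; true; false];
  [:: true; false; true; true];
  [:: true; true; false; false];
  [:: true; true; false; true];
  [:: false; false; false; true; false];
  [:: false; false; false; true; true];
  [:: false; false; true; false; false];
  [:: false; false; true; false; true];
  [:: false; false; true; true; false];
  [:: false; true; false; false; false];
  [:: false; true; false; false; true];
  [:: false; true; false; true; false];
  [:: false; true; false; true; true];
  [:: false; true; true; false; false];
  [:: false; true; true; false; true];
  [:: true; false; false; false; true];
  [:: true; false; false; true; false];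
  [:: true; false; false; true; true];
  [:: true; false; true; false; false];
  [:: true; false; true; false; true];
  [:: true; false; true; true; false];
  [:: true; true; false; false; false];
  [:: true; true; false; false; true];
  [:: true; true; false; true; false];
  [:: true; true; false; true; true];
  [:: false; false; false; true; false; false];
  [:: false; false; false; true; false; true];
  [:: false; false; false; true; true; false];
  [:: false; false; true; false; false; false];
  [:: false; false; true; false; false; true];
  [:: false; false; true; false; true; false];
  [:: false; false; true; false; true; true];
  [:: false; false; true; true; false; false];
  [:: false; false; true; true; false; true];
  [:: false; true; false; false; false; true];
  [:: false; true; false; false; true; false];
  [:: false; true; false; false; true; true];
  [:: false; true; false; true; false; false];
  [:: false; true; false; true; true; false];
  [:: false; true; true; false; false; false];
  [:: false; true; true; false; false; true];
  [:: false; true; true; false; true; false];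
  [:: false; true; true; false; true; true];
  [:: true; false; false; false; true; false];
  [:: true; false; false; false; true; true];
  [:: true; false; false; true; false; false];
  [:: true; false; false; true; false; true];
  [:: true; false; false; true; true; false];
  [:: true; false; true; false; false; false];
  [:: true; false; true; false; false; true];
  [:: true; false; true; false; true; true];
  [:: true; false; true; true; false; false];
  [:: true; false; true; true; false; true];
  [:: true; true; false; false; false; true];
  [:: true; true; false; false; true; false];
  [:: true; true; false; false; true; true];
  [:: true; true; false; true; false; false];
  [:: true; true; false; true; false; true];
  [:: true; true; false; true; true; false];
  [:: false; false; false; true; false; false; false];
  [:: false; false; false; true; false; false; true];
  [:: false; false; false; true; false; true; false];
  [:: false; false; false; true; false; true; true];
  [:: false; false; false; true; true; false; false];
  [:: false; false; false; true; true; false; true];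
  [:: false; false; true; false; false; false; true];
  [:: false; false; true; false; false; true; false];
  [:: false; false; true; false; false; true; true];
  [:: false; false; true; false; true; false; false];
  [:: false; false; true; true; false; false; false];
  [:: false; false; true; true; false; false; true];
  [:: false; false; true; true; false; true; false];
  [:: false; false; true; true; false; true; true];
  [:: false; true; false; false; false; true; false];
  [:: false; true; false; false; false; true; true];
  [:: false; true; false; false; true; false; false];
  [:: false; true; false; false; true; false; true];
  [:: false; true; false; true; false; false; false];
  [:: false; true; false; true; false; false; true];
  [:: false; true; false; true; true; false; false];
  [:: false; true; false; true; true; false; true];
  [:: false; true; true; false; false; false; true];
  [:: false; true; true; false; false; true; true];
  [:: false; true; true; false; true; false; true];
  [:: true; false; false; false; true; false; false];
  [:: true; false; false; false; true; false; true];
  [:: true; false; false; false; true; true; false];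
  [:: true; false; false; true; false; false; false];
  [:: true; false; false; true; false; false; true];
  [:: true; false; false; true; false; true; false];
  [:: true; false; true; false; false; false; true];
  [:: true; false; true; false; false; true; false];
  [:: true; false; true; false; false; true; true];
  [:: true; false; true; false; true; true; false];
  [:: true; false; true; true; false; false; false];
  [:: true; false; true; true; false; true; false];
  [:: true; true; false; false; false; true; false];
  [:: true; true; false; false; true; false; true];
  [:: true; true; false; false; true; true; false];
  [:: true; true; false; true; false; false; false];
  [:: true; true; false; true; false; true; true];
  [:: true; true; false; true; true; false; false];
  [:: false; false; false; true; false; true; false; false];
  [:: false; false; false; true; true; false; true; false];
  [:: false; false; false; true; true; false; true; true];
  [:: false; false; true; false; false; false; true; false];
  [:: false; false; true; false; false; true; false; false];
  [:: false; false; true; false; false; true; false; true];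
  [:: false; false; true; false; true; false; false; false];
  [:: false; false; true; false; true; false; false; true];
  [:: false; false; true; true; false; false; true; true];
  [:: false; true; false; false; false; true; false; false];
  [:: false; true; false; false; false; true; false; true];
  [:: false; true; false; false; false; true; true; false];
  [:: false; true; false; false; true; false; false; true];
  [:: false; true; false; false; true; false; true; false];
  [:: false; true; false; true; false; false; true; false];
  [:: false; true; false; true; false; false; true; true];
  [:: false; true; false; true; true; false; false; false];
  [:: false; true; false; true; true; false; true; false];
  [:: false; true; true; false; false; false; true; false];
  [:: false; true; true; false; false; true; true; false];
  [:: false; true; true; false; true; false; true; true];
  [:: true; false; false; false; true; false; false; true];
  [:: true; false; false; false; true; false; true; true];
  [:: true; false; false; false; true; true; false; true];
  [:: true; false; false; true; false; false; false; true];
  [:: true; false; false; true; false; false; true; true];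
  [:: true; false; false; true; false; true; false; false];
  [:: true; false; true; false; false; false; true; false];
  [:: true; false; true; false; false; false; true; true];
  [:: true; false; true; false; false; true; false; false];
  [:: true; false; true; false; true; true; false; true];
  [:: true; false; true; true; false; false; false; true];
  [:: true; false; true; true; false; true; false; true];
  [:: true; true; false; false; false; true; false; true];
  [:: true; true; false; false; true; false; true; false];
  [:: true; true; false; true; false; false; false; true];
  [:: true; true; false; true; false; true; true; false];
  [:: true; true; false; true; true; false; false; false];
  [:: false; false; false; true; false; true; false; false; false];
  [:: false; false; false; true; false; true; false; false; true];
  [:: false; false; true; false; false; false; true; false; false];
  [:: false; false; true; false; false; false; true; false; true];
  [:: false; false; true; false; false; true; false; false; true];
  [:: false; false; true; false; false; true; false; true; false];
  [:: false; false; true; false; true; false; false; true; false];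
  [:: false; false; true; false; true; false; false; true; true];
  [:: false; false; true; true; false; false; true; true; false];
  [:: false; true; false; false; false; true; false; false; true];
  [:: false; true; false; false; false; true; true; false; true];
  [:: false; true; false; false; true; false; false; true; true];
  [:: false; true; false; false; true; false; true; false; false];
  [:: false; true; false; true; false; false; true; false; false];
  [:: false; true; false; true; true; false; false; false; true];
  [:: false; true; false; true; true; false; true; false; true];
  [:: false; true; true; false; false; false; true; false; true];
  [:: false; true; true; false; true; false; true; true; false];
  [:: true; false; false; false; true; true; false; true; false];
  [:: true; false; false; true; false; false; false; true; false];
  [:: true; false; true; false; false; false; true; false; true];
  [:: true; false; true; false; false; false; true; true; false];
  [:: true; false; true; true; false; false; false; true; false];
  [:: true; false; true; true; false; true; false; true; true];
  [:: true; true; false; false; false; true; false; true; true];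
  [:: true; true; false; false; true; false; true; false; false];
  [:: true; true; false; true; false; false; false; true; true];
  [:: true; true; false; true; false; true; true; false; true];
  [:: false; false; false; true; false; true; false; false; true; true];
  [:: false; false; true; false; false; true; false; false; true; true]].
Definition g1 : code := [:: 0; 5; 3; 6].
Definition g2 : code := [:: 1; 2; 0; 3].
Definition m1 : code := [:: 2; 3; 1; 0].
Definition m2 : code := [:: 0; 7; 1; 6].
Definition r1 : code := [:: 2; 0; 3; 1].
Definition r2 : code := [:: 7; 4; 2; 1].
Definition Tab : seq (code * code * (code * code * bool)) := [:: ([:: 1; 2; 3; 0], [:: 6; 1; 3; 4], ([:: 0; 5; 3; 6], [:: 6; 4; 1; 3], true));
  ([:: 1; 6; 3; 4], [:: 1; 2; 0; 3], ([:: 0; 5; 3; 6], [:: 2; 4; 5; 3], true));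
  ([:: 5; 2; 3; 4], [:: 0; 7; 5; 2], ([:: 0; 5; 3; 6], [:: 6; 0; 5; 3], true));
  ([:: 5; 6; 3; 0], [:: 7; 4; 2; 1], ([:: 0; 5; 3; 6], [:: 2; 0; 1; 3], true));
  ([:: 1; 3; 4; 6], [:: 6; 1; 3; 4], ([:: 0; 5; 3; 6], [:: 7; 4; 2; 1], true));
  ([:: 1; 7; 0; 6], [:: 3; 4; 2; 5], ([:: 0; 5; 3; 6], [:: 3; 4; 2; 5], true));
  ([:: 5; 3; 0; 6], [:: 1; 2; 0; 3], ([:: 0; 5; 3; 6], [:: 7; 0; 2; 5], true));
  ([:: 5; 7; 4; 6], [:: 0; 7; 5; 2], ([:: 0; 5; 3; 6], [:: 3; 0; 2; 1], true));
  ([:: 2; 0; 3; 1], [:: 7; 4; 2; 1], ([:: 0; 5; 3; 6], [:: 1; 2; 0; 3], true));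
  ([:: 2; 4; 3; 5], [:: 1; 2; 0; 3], ([:: 0; 5; 3; 6], [:: 5; 6; 0; 3], true));
  ([:: 6; 0; 3; 5], [:: 6; 1; 7; 0], ([:: 0; 5; 3; 6], [:: 1; 6; 4; 3], true));
  ([:: 6; 4; 3; 1], [:: 0; 3; 5; 6], ([:: 0; 5; 3; 6], [:: 5; 2; 4; 3], true));
  ([:: 2; 3; 1; 0], [:: 0; 7; 1; 6], ([:: 0; 5; 3; 6], [:: 1; 2; 0; 3], false));
  ([:: 2; 3; 1; 0], [:: 6; 1; 7; 0], ([:: 0; 5; 3; 6], [:: 7; 0; 2; 5], false));
  ([:: 2; 3; 5; 4], [:: 0; 7; 5; 2], ([:: 0; 2; 5; 7], [:: 7; 1; 0; 6], false));
  ([:: 2; 3; 5; 4], [:: 6; 1; 3; 4], ([:: 0; 2; 5; 7], [:: 1; 7; 2; 4], false));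
  ([:: 2; 7; 1; 4], [:: 5; 2; 4; 3], ([:: 0; 2; 5; 7], [:: 5; 7; 2; 0], false));
  ([:: 2; 7; 1; 4], [:: 7; 4; 2; 1], ([:: 0; 2; 5; 7], [:: 3; 1; 0; 2], false));
  ([:: 2; 7; 5; 0], [:: 1; 6; 4; 3], ([:: 0; 5; 3; 6], [:: 3; 4; 2; 5], false));
  ([:: 2; 7; 5; 0], [:: 3; 0; 2; 1], ([:: 0; 5; 3; 6], [:: 5; 6; 0; 3], false));
  ([:: 6; 3; 1; 4], [:: 1; 2; 0; 3], ([:: 0; 5; 3; 6], [:: 5; 2; 4; 3], false));
  ([:: 6; 3; 1; 4], [:: 7; 0; 2; 5], ([:: 0; 5; 3; 6], [:: 7; 4; 2; 1], false));
  ([:: 6; 3; 5; 0], [:: 5; 6; 0; 3], ([:: 0; 2; 5; 7], [:: 3; 1; 4; 6], false));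
  ([:: 6; 3; 5; 0], [:: 3; 4; 2; 5], ([:: 0; 2; 5; 7], [:: 1; 3; 2; 0], false));
  ([:: 6; 7; 1; 0], [:: 0; 3; 1; 2], ([:: 0; 2; 5; 7], [:: 5; 3; 2; 4], false));
  ([:: 6; 7; 1; 0], [:: 2; 1; 3; 0], ([:: 0; 2; 5; 7], [:: 7; 1; 4; 2], false));
  ([:: 6; 7; 5; 4], [:: 0; 3; 5; 6], ([:: 0; 5; 3; 6], [:: 3; 0; 2; 1], false));
  ([:: 6; 7; 5; 4], [:: 2; 1; 7; 4], ([:: 0; 5; 3; 6], [:: 1; 6; 4; 3], false));
  ([:: 3; 0; 5; 6], [:: 1; 2; 0; 3], ([:: 0; 5; 3; 6], [:: 1; 7; 2; 4], true));
  ([:: 3; 4; 1; 6], [:: 0; 3; 5; 6], ([:: 0; 5; 3; 6], [:: 5; 3; 2; 4], true));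
  ([:: 7; 0; 1; 6], [:: 6; 1; 7; 0], ([:: 0; 5; 3; 6], [:: 1; 3; 2; 0], true));
  ([:: 7; 4; 5; 6], [:: 3; 4; 2; 5], ([:: 0; 5; 3; 6], [:: 5; 7; 2; 0], true));
  ([:: 3; 2; 0; 1], [:: 5; 2; 4; 3], ([:: 0; 2; 5; 7], [:: 6; 1; 7; 0], false));
  ([:: 3; 2; 0; 1], [:: 3; 4; 2; 5], ([:: 0; 2; 5; 7], [:: 3; 0; 2; 1], false));
  ([:: 3; 2; 4; 5], [:: 1; 2; 0; 3], ([:: 0; 5; 3; 6], [:: 6; 4; 1; 3], false));
  ([:: 3; 2; 4; 5], [:: 3; 0; 2; 1], ([:: 0; 5; 3; 6], [:: 5; 3; 2; 4], false));
  ([:: 3; 6; 0; 5], [:: 0; 3; 5; 6], ([:: 0; 2; 5; 7], [:: 7; 0; 2; 5], false));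
  ([:: 3; 6; 0; 5], [:: 6; 1; 7; 0], ([:: 0; 2; 5; 7], [:: 2; 1; 7; 4], false));
  ([:: 3; 6; 4; 1], [:: 0; 7; 5; 2], ([:: 0; 5; 3; 6], [:: 1; 7; 2; 4], false));
  ([:: 3; 6; 4; 1], [:: 2; 1; 3; 0], ([:: 0; 5; 3; 6], [:: 2; 0; 1; 3], false));
  ([:: 7; 2; 0; 5], [:: 0; 3; 1; 2], ([:: 0; 5; 3; 6], [:: 6; 0; 5; 3], false));
  ([:: 7; 2; 0; 5], [:: 6; 1; 3; 4], ([:: 0; 5; 3; 6], [:: 1; 3; 2; 0], false));
  ([:: 7; 2; 4; 1], [:: 0; 7; 1; 6], ([:: 0; 2; 5; 7], [:: 6; 1; 3; 4], false));
  ([:: 7; 2; 4; 1], [:: 2; 1; 7; 4], ([:: 0; 2; 5; 7], [:: 7; 4; 2; 1], false));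
  ([:: 7; 6; 0; 1], [:: 1; 6; 4; 3], ([:: 0; 5; 3; 6], [:: 5; 7; 2; 0], false));
  ([:: 7; 6; 0; 1], [:: 7; 0; 2; 5], ([:: 0; 5; 3; 6], [:: 2; 4; 5; 3], false));
  ([:: 7; 6; 4; 5], [:: 5; 6; 0; 3], ([:: 0; 2; 5; 7], [:: 3; 4; 2; 5], false));
  ([:: 7; 6; 4; 5], [:: 7; 4; 2; 1], ([:: 0; 2; 5; 7], [:: 2; 1; 3; 0], false))].
Definition Trie : seq (seq (seq (seq nat))) := [:: [:: [:: [:: 0; 0; 0; 0; 0; 0; 0; 0]; [:: 0; 0; 0; 0; 0; 0; 0; 0]; [:: 0; 0; 0; 0; 0; 0; 0; 0]; [:: 0; 0; 0; 0; 0; 0; 0; 0]; [:: 0; 0; 0; 0; 0; 0; 0; 0]; [:: 0; 0; 0; 0; 0; 0; 0; 0]; [:: 0; 0; 0; 0; 0; 0; 0; 0]; [:: 0; 0; 0; 0; 0; 0; 0; 0]]; [:: [:: 0; 0; 0; 0; 0; 0; 0; 0]; [:: 0; 0; 0; 0; 0; 0; 0; 0]; [:: 0; 0; 0; 1; 0; 0; 0; 0]; [:: 0; 0; 70; 0; 0; 0; 0; 0]; [:: 0; 0; 0; 0; 0; 0; 0; 0]; [:: 0; 0; 0; 0; 0; 0; 0; 0]; [:: 0; 0; 0; 0; 0; 0; 0; 4]; [:: 0; 0; 0; 0; 0; 0; 59; 0]]; [:: [:: 0; 0; 0; 0; 0; 0; 0; 0]; [:: 0; 0; 0; 179; 0;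 0; 0; 0]; [:: 0; 0; 0; 0; 0; 0; 0; 0]; [:: 0; 114; 0; 0; 0; 0; 0; 0]; [:: 0; 0; 0; 0; 0; 0; 0; 0]; [:: 0; 0; 0; 0; 0; 0; 0; 155]; [:: 0; 0; 0; 0; 0; 0; 0; 0]; [:: 0; 0; 0; 0; 0; 169; 0; 0]]; [:: [:: 0; 0; 0; 0; 0; 0; 0; 0]; [:: 0; 0; 164; 0; 0; 0; 0; 0]; [:: 0; 146; 0; 0; 0; 0; 0; 0]; [:: 0; 0; 0; 0; 0; 0; 0; 0]; [:: 0; 0; 0; 0; 0; 0; 0; 0]; [:: 0; 0; 0; 0; 0; 0; 101; 0]; [:: 0; 0; 0; 0; 0; 154; 0; 0]; [:: 0; 0; 0; 0; 0; 0; 0; 0]]; [:: [:: 0; 0; 0; 0; 0; 0; 0; 0]; [:: 0; 0; 0; 0; 0; 0; 0; 0]; [:: 0; 0; 0; 0; 0; 0; 0; 0]; [:: 0; 0; 0; 0; 0; 0; 0; 0]; [:: 0; 0; 0; 0; 0; 0; 0; 0]; [:: 0; 0; 0; 0; 0; 0; 0; 0]; [:: 0; 0; 0; 0; 0; 0; 0; 0]; [:: 0; 0; 0; 0; 0; 0; 0; 0]]; [:: [:: 0; 0; 0; 0; 0; 0; 0; 0]; [:: 0; 0; 0; 0; 0; 0; 0; 0]; [:: 0; 0; 0; 0; 0; 0; 0; 40]; [:: 0; 0; 0; 0; 0; 0; 2; 0]; [:: 0; 0; 0; 0; 0; 0; 0; 0]; [:: 0; 0; 0; 0; 0; 0; 0;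 0]; [:: 0; 0; 0; 90; 0; 0; 0; 0]; [:: 0; 0; 8; 0; 0; 0; 0; 0]]; [:: [:: 0; 0; 0; 0; 0; 0; 0; 0]; [:: 0; 0; 0; 0; 0; 0; 0; 139]; [:: 0; 0; 0; 0; 0; 0; 0; 0]; [:: 0; 0; 0; 0; 0; 160; 0; 0]; [:: 0; 0; 0; 0; 0; 0; 0; 0]; [:: 0; 0; 0; 186; 0; 0; 0; 0]; [:: 0; 0; 0; 0; 0; 0; 0; 0]; [:: 0; 158; 0; 0; 0; 0; 0; 0]]; [:: [:: 0; 0; 0; 0; 0; 0; 0; 0]; [:: 0; 0; 0; 0; 0; 0; 172; 0]; [:: 0; 0; 0; 0; 0; 72; 0; 0]; [:: 0; 0; 0; 0; 0; 0; 0; 0]; [:: 0; 0; 0; 0; 0; 0; 0; 0]; [:: 0; 0; 176; 0; 0; 0; 0; 0]; [:: 0; 132; 0; 0; 0; 0; 0; 0]; [:: 0; 0; 0; 0; 0; 0; 0; 0]]]; [:: [:: [:: 0; 0; 0; 0; 0; 0; 0; 0]; [:: 0; 0; 0; 0; 0; 0; 0; 0]; [:: 0; 0; 0; 185; 0; 0; 0; 0]; [:: 0; 0; 142; 0; 0; 0; 0; 0]; [:: 0; 0; 0; 0; 0; 0; 0; 0]; [:: 0; 0; 0; 0; 0; 0; 0; 0]; [:: 0; 0; 0; 0; 0; 0; 0; 181]; [:: 0; 0; 0; 0; 0; 0; 180; 0]]; [:: [:: 0; 0; 0; 0; 0; 0; 0; 0]; [:: 0; 0; 0; 0; 0; 0;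 0; 0]; [:: 0; 0; 0; 0; 0; 0; 0; 0]; [:: 0; 0; 0; 0; 0; 0; 0; 0]; [:: 0; 0; 0; 0; 0; 0; 0; 0]; [:: 0; 0; 0; 0; 0; 0; 0; 0]; [:: 0; 0; 0; 0; 0; 0; 0; 0]; [:: 0; 0; 0; 0; 0; 0; 0; 0]]; [:: [:: 0; 0; 0; 3; 0; 0; 0; 0]; [:: 0; 0; 0; 0; 0; 0; 0; 0]; [:: 0; 0; 0; 0; 0; 0; 0; 0]; [:: 48; 0; 0; 0; 0; 0; 0; 0]; [:: 0; 0; 0; 0; 0; 0; 0; 9]; [:: 0; 0; 0; 0; 0; 0; 0; 0]; [:: 0; 0; 0; 0; 0; 0; 0; 0]; [:: 0; 0; 0; 0; 18; 0; 0; 0]]; [:: [:: 0; 0; 121; 0; 0; 0; 0; 0]; [:: 0; 0; 0; 0; 0; 0; 0; 0]; [:: 191; 0; 0; 0; 0; 0; 0; 0]; [:: 0; 0; 0; 0; 0; 0; 0; 0]; [:: 0; 0; 0; 0; 0; 0; 171; 0]; [:: 0; 0; 0; 0; 0; 0; 0; 0]; [:: 0; 0; 0; 0; 140; 0; 0; 0]; [:: 0; 0; 0; 0; 0; 0; 0; 0]]; [:: [:: 0; 0; 0; 0; 0; 0; 0; 0]; [:: 0; 0; 0; 0; 0; 0; 0; 0]; [:: 0; 0; 0; 0; 0; 0; 0; 161]; [:: 0; 0; 0; 0; 0; 0; 189; 0]; [:: 0; 0; 0; 0; 0; 0; 0; 0]; [:: 0; 0; 0; 0; 0; 0; 0; 0];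 [:: 0; 0; 0; 118; 0; 0; 0; 0]; [:: 0; 0; 187; 0; 0; 0; 0; 0]]; [:: [:: 0; 0; 0; 0; 0; 0; 0; 0]; [:: 0; 0; 0; 0; 0; 0; 0; 0]; [:: 0; 0; 0; 0; 0; 0; 0; 0]; [:: 0; 0; 0; 0; 0; 0; 0; 0]; [:: 0; 0; 0; 0; 0; 0; 0; 0]; [:: 0; 0; 0; 0; 0; 0; 0; 0]; [:: 0; 0; 0; 0; 0; 0; 0; 0]; [:: 0; 0; 0; 0; 0; 0; 0; 0]]; [:: [:: 0; 0; 0; 0; 0; 0; 0; 12]; [:: 0; 0; 0; 0; 0; 0; 0; 0]; [:: 0; 0; 0; 0; 0; 0; 0; 0]; [:: 0; 0; 0; 0; 5; 0; 0; 0]; [:: 0; 0; 0; 29; 0; 0; 0; 0]; [:: 0; 0; 0; 0; 0; 0; 0; 0]; [:: 0; 0; 0; 0; 0; 0; 0; 0]; [:: 15; 0; 0; 0; 0; 0; 0; 0]]; [:: [:: 0; 0; 0; 0; 0; 0; 115; 0]; [:: 0; 0; 0; 0; 0; 0; 0; 0]; [:: 0; 0; 0; 0; 144; 0; 0; 0]; [:: 0; 0; 0; 0; 0; 0; 0; 0]; [:: 0; 0; 170; 0; 0; 0; 0; 0]; [:: 0; 0; 0; 0; 0; 0; 0; 0]; [:: 159; 0; 0; 0; 0; 0; 0; 0]; [:: 0; 0; 0; 0; 0; 0; 0; 0]]]; [:: [:: [:: 0; 0; 0; 0; 0; 0; 0; 0]; [:: 0; 0; 0; 7; 0; 0; 0;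 0]; [:: 0; 0; 0; 0; 0; 0; 0; 0]; [:: 0; 83; 0; 0; 0; 0; 0; 0]; [:: 0; 0; 0; 0; 0; 0; 0; 0]; [:: 0; 0; 0; 0; 0; 0; 0; 17]; [:: 0; 0; 0; 0; 0; 0; 0; 0]; [:: 0; 0; 0; 0; 0; 33; 0; 0]]; [:: [:: 0; 0; 0; 143; 0; 0; 0; 0]; [:: 0; 0; 0; 0; 0; 0; 0; 0]; [:: 0; 0; 0; 0; 0; 0; 0; 0]; [:: 178; 0; 0; 0; 0; 0; 0; 0]; [:: 0; 0; 0; 0; 0; 0; 0; 116]; [:: 0; 0; 0; 0; 0; 0; 0; 0]; [:: 0; 0; 0; 0; 0; 0; 0; 0]; [:: 0; 0; 0; 0; 182; 0; 0; 0]]; [:: [:: 0; 0; 0; 0; 0; 0; 0; 0]; [:: 0; 0; 0; 0; 0; 0; 0; 0]; [:: 0; 0; 0; 0; 0; 0; 0; 0]; [:: 0; 0; 0; 0; 0; 0; 0; 0]; [:: 0; 0; 0; 0; 0; 0; 0; 0]; [:: 0; 0; 0; 0; 0; 0; 0; 0]; [:: 0; 0; 0; 0; 0; 0; 0; 0]; [:: 0; 0; 0; 0; 0; 0; 0; 0]]; [:: [:: 0; 125; 0; 0; 0; 0; 0; 0]; [:: 107; 0; 0; 0; 0; 0; 0; 0]; [:: 0; 0; 0; 0; 0; 0; 0; 0]; [:: 0; 0; 0; 0; 0; 0; 0; 0]; [:: 0; 0; 0; 0; 0; 60; 0; 0]; [:: 0; 0; 0; 0; 165; 0; 0; 0]; [::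 0; 0; 0; 0; 0; 0; 0; 0]; [:: 0; 0; 0; 0; 0; 0; 0; 0]]; [:: [:: 0; 0; 0; 0; 0; 0; 0; 0]; [:: 0; 0; 0; 0; 0; 0; 0; 22]; [:: 0; 0; 0; 0; 0; 0; 0; 0]; [:: 0; 0; 0; 0; 0; 11; 0; 0]; [:: 0; 0; 0; 0; 0; 0; 0; 0]; [:: 0; 0; 0; 52; 0; 0; 0; 0]; [:: 0; 0; 0; 0; 0; 0; 0; 0]; [:: 0; 28; 0; 0; 0; 0; 0; 0]]; [:: [:: 0; 0; 0; 0; 0; 0; 0; 190]; [:: 0; 0; 0; 0; 0; 0; 0; 0]; [:: 0; 0; 0; 0; 0; 0; 0; 0]; [:: 0; 0; 0; 0; 122; 0; 0; 0]; [:: 0; 0; 0; 157; 0; 0; 0; 0]; [:: 0; 0; 0; 0; 0; 0; 0; 0]; [:: 0; 0; 0; 0; 0; 0; 0; 0]; [:: 119; 0; 0; 0; 0; 0; 0; 0]]; [:: [:: 0; 0; 0; 0; 0; 0; 0; 0]; [:: 0; 0; 0; 0; 0; 0; 0; 0]; [:: 0; 0; 0; 0; 0; 0; 0; 0]; [:: 0; 0; 0; 0; 0; 0; 0; 0]; [:: 0; 0; 0; 0; 0; 0; 0; 0]; [:: 0; 0; 0; 0; 0; 0; 0; 0]; [:: 0; 0; 0; 0; 0; 0; 0; 0]; [:: 0; 0; 0; 0; 0; 0; 0; 0]]; [:: [:: 0; 0; 0; 0; 0; 134; 0; 0]; [:: 0; 0; 0; 0; 41; 0; 0; 0]; [:: 0;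 0; 0; 0; 0; 0; 0; 0]; [:: 0; 0; 0; 0; 0; 0; 0; 0]; [:: 0; 162; 0; 0; 0; 0; 0; 0]; [:: 91; 0; 0; 0; 0; 0; 0; 0]; [:: 0; 0; 0; 0; 0; 0; 0; 0]; [:: 0; 0; 0; 0; 0; 0; 0; 0]]]; [:: [:: [:: 0; 0; 0; 0; 0; 0; 0; 0]; [:: 0; 0; 31; 0; 0; 0; 0; 0]; [:: 0; 58; 0; 0; 0; 0; 0; 0]; [:: 0; 0; 0; 0; 0; 0; 0; 0]; [:: 0; 0; 0; 0; 0; 0; 0; 0]; [:: 0; 0; 0; 0; 0; 0; 14; 0]; [:: 0; 0; 0; 0; 0; 113; 0; 0]; [:: 0; 0; 0; 0; 0; 0; 0; 0]]; [:: [:: 0; 0; 99; 0; 0; 0; 0; 0]; [:: 0; 0; 0; 0; 0; 0; 0; 0]; [:: 56; 0; 0; 0; 0; 0; 0; 0]; [:: 0; 0; 0; 0; 0; 0; 0; 0]; [:: 0; 0; 0; 0; 0; 0; 153; 0]; [:: 0; 0; 0; 0; 0; 0; 0; 0]; [:: 0; 0; 0; 0; 26; 0; 0; 0]; [:: 0; 0; 0; 0; 0; 0; 0; 0]]; [:: [:: 0; 95; 0; 0; 0; 0; 0; 0]; [:: 131; 0; 0; 0; 0; 0; 0; 0]; [:: 0; 0; 0; 0; 0; 0; 0; 0]; [:: 0; 0; 0; 0; 0; 0; 0; 0]; [:: 0; 0; 0; 0; 0; 47; 0; 0]; [:: 0; 0; 0; 0; 71; 0; 0; 0]; [:: 0;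 0; 0; 0; 0; 0; 0; 0]; [:: 0; 0; 0; 0; 0; 0; 0; 0]]; [:: [:: 0; 0; 0; 0; 0; 0; 0; 0]; [:: 0; 0; 0; 0; 0; 0; 0; 0]; [:: 0; 0; 0; 0; 0; 0; 0; 0]; [:: 0; 0; 0; 0; 0; 0; 0; 0]; [:: 0; 0; 0; 0; 0; 0; 0; 0]; [:: 0; 0; 0; 0; 0; 0; 0; 0]; [:: 0; 0; 0; 0; 0; 0; 0; 0]; [:: 0; 0; 0; 0; 0; 0; 0; 0]]; [:: [:: 0; 0; 0; 0; 0; 0; 0; 0]; [:: 0; 0; 0; 0; 0; 0; 89; 0]; [:: 0; 0; 0; 0; 0; 50; 0; 0]; [:: 0; 0; 0; 0; 0; 0; 0; 0]; [:: 0; 0; 0; 0; 0; 0; 0; 0]; [:: 0; 0; 39; 0; 0; 0; 0; 0]; [:: 0; 20; 0; 0; 0; 0; 0; 0]; [:: 0; 0; 0; 0; 0; 0; 0; 0]]; [:: [:: 0; 0; 0; 0; 0; 0; 87; 0]; [:: 0; 0; 0; 0; 0; 0; 0; 0]; [:: 0; 0; 0; 0; 130; 0; 0; 0]; [:: 0; 0; 0; 0; 0; 0; 0; 0]; [:: 0; 0; 37; 0; 0; 0; 0; 0]; [:: 0; 0; 0; 0; 0; 0; 0; 0]; [:: 69; 0; 0; 0; 0; 0; 0; 0]; [:: 0; 0; 0; 0; 0; 0; 0; 0]]; [:: [:: 0; 0; 0; 0; 0; 163; 0; 0]; [:: 0; 0; 0; 0; 127; 0; 0; 0]; [:: 0;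 0; 0; 0; 0; 0; 0; 0]; [:: 0; 0; 0; 0; 0; 0; 0; 0]; [:: 0; 100; 0; 0; 0; 0; 0; 0]; [:: 65; 0; 0; 0; 0; 0; 0; 0]; [:: 0; 0; 0; 0; 0; 0; 0; 0]; [:: 0; 0; 0; 0; 0; 0; 0; 0]]; [:: [:: 0; 0; 0; 0; 0; 0; 0; 0]; [:: 0; 0; 0; 0; 0; 0; 0; 0]; [:: 0; 0; 0; 0; 0; 0; 0; 0]; [:: 0; 0; 0; 0; 0; 0; 0; 0]; [:: 0; 0; 0; 0; 0; 0; 0; 0]; [:: 0; 0; 0; 0; 0; 0; 0; 0]; [:: 0; 0; 0; 0; 0; 0; 0; 0]; [:: 0; 0; 0; 0; 0; 0; 0; 0]]]; [:: [:: [:: 0; 0; 0; 0; 0; 0; 0; 0]; [:: 0; 0; 0; 0; 0; 0; 0; 0]; [:: 0; 0; 0; 0; 0; 0; 0; 0]; [:: 0; 0; 0; 0; 0; 0; 0; 0]; [:: 0; 0; 0; 0; 0; 0; 0; 0]; [:: 0; 0; 0; 0; 0; 0; 0; 0]; [:: 0; 0; 0; 0; 0; 0; 0; 0]; [:: 0; 0; 0; 0; 0; 0; 0; 0]]; [:: [:: 0; 0; 0; 0; 0; 0; 0; 0]; [:: 0; 0; 0; 0; 0; 0; 0; 0]; [:: 0; 0; 0; 0; 0; 0; 0; 45]; [:: 0; 0; 0; 0; 0; 0; 137; 0]; [:: 0; 0; 0; 0; 0; 0; 0; 0]; [:: 0; 0; 0; 0; 0; 0; 0; 0]; [:: 0;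 0; 0; 93; 0; 0; 0; 0]; [:: 0; 0; 183; 0; 0; 0; 0; 0]]; [:: [:: 0; 0; 0; 0; 0; 0; 0; 0]; [:: 0; 0; 0; 0; 0; 0; 0; 61]; [:: 0; 0; 0; 0; 0; 0; 0; 0]; [:: 0; 0; 0; 0; 0; 109; 0; 0]; [:: 0; 0; 0; 0; 0; 0; 0; 0]; [:: 0; 0; 0; 106; 0; 0; 0; 0]; [:: 0; 0; 0; 0; 0; 0; 0; 0]; [:: 0; 117; 0; 0; 0; 0; 0; 0]]; [:: [:: 0; 0; 0; 0; 0; 0; 0; 0]; [:: 0; 0; 0; 0; 0; 0; 97; 0]; [:: 0; 0; 0; 0; 0; 24; 0; 0]; [:: 0; 0; 0; 0; 0; 0; 0; 0]; [:: 0; 0; 0; 0; 0; 0; 0; 0]; [:: 0; 0; 102; 0; 0; 0; 0; 0]; [:: 0; 54; 0; 0; 0; 0; 0; 0]; [:: 0; 0; 0; 0; 0; 0; 0; 0]]; [:: [:: 0; 0; 0; 0; 0; 0; 0; 0]; [:: 0; 0; 0; 0; 0; 0; 0; 0]; [:: 0; 0; 0; 0; 0; 0; 0; 0]; [:: 0; 0; 0; 0; 0; 0; 0; 0]; [:: 0; 0; 0; 0; 0; 0; 0; 0]; [:: 0; 0; 0; 0; 0; 0; 0; 0]; [:: 0; 0; 0; 0; 0; 0; 0; 0]; [:: 0; 0; 0; 0; 0; 0; 0; 0]]; [:: [:: 0; 0; 0; 0; 0; 0; 0; 0]; [:: 0; 0; 0; 0; 0; 0; 0; 0]; [:: 0;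 0; 0; 111; 0; 0; 0; 0]; [:: 0; 0; 77; 0; 0; 0; 0; 0]; [:: 0; 0; 0; 0; 0; 0; 0; 0]; [:: 0; 0; 0; 0; 0; 0; 0; 0]; [:: 0; 0; 0; 0; 0; 0; 0; 167]; [:: 0; 0; 0; 0; 0; 0; 63; 0]]; [:: [:: 0; 0; 0; 0; 0; 0; 0; 0]; [:: 0; 0; 0; 141; 0; 0; 0; 0]; [:: 0; 0; 0; 0; 0; 0; 0; 0]; [:: 0; 43; 0; 0; 0; 0; 0; 0]; [:: 0; 0; 0; 0; 0; 0; 0; 0]; [:: 0; 0; 0; 0; 0; 0; 0; 136]; [:: 0; 0; 0; 0; 0; 0; 0; 0]; [:: 0; 0; 0; 0; 0; 80; 0; 0]]; [:: [:: 0; 0; 0; 0; 0; 0; 0; 0]; [:: 0; 0; 85; 0; 0; 0; 0; 0]; [:: 0; 67; 0; 0; 0; 0; 0; 0]; [:: 0; 0; 0; 0; 0; 0; 0; 0]; [:: 0; 0; 0; 0; 0; 0; 0; 0]; [:: 0; 0; 0; 0; 0; 0; 35; 0]; [:: 0; 0; 0; 0; 0; 74; 0; 0]; [:: 0; 0; 0; 0; 0; 0; 0; 0]]]; [:: [:: [:: 0; 0; 0; 0; 0; 0; 0; 0]; [:: 0; 0; 0; 0; 0; 0; 0; 0]; [:: 0; 0; 0; 0; 0; 0; 0; 103]; [:: 0; 0; 0; 0; 0; 0; 148; 0]; [:: 0; 0; 0; 0; 0; 0; 0; 0]; [:: 0; 0; 0; 0; 0; 0; 0; 0]; [:: 0;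 0; 0; 145; 0; 0; 0; 0]; [:: 0; 0; 156; 0; 0; 0; 0; 0]]; [:: [:: 0; 0; 0; 0; 0; 0; 0; 0]; [:: 0; 0; 0; 0; 0; 0; 0; 0]; [:: 0; 0; 0; 0; 0; 0; 0; 0]; [:: 0; 0; 0; 0; 0; 0; 0; 0]; [:: 0; 0; 0; 0; 0; 0; 0; 0]; [:: 0; 0; 0; 0; 0; 0; 0; 0]; [:: 0; 0; 0; 0; 0; 0; 0; 0]; [:: 0; 0; 0; 0; 0; 0; 0; 0]]; [:: [:: 0; 0; 0; 0; 0; 0; 0; 78]; [:: 0; 0; 0; 0; 0; 0; 0; 0]; [:: 0; 0; 0; 0; 0; 0; 0; 0]; [:: 0; 0; 0; 0; 174; 0; 0; 0]; [:: 0; 0; 0; 133; 0; 0; 0; 0]; [:: 0; 0; 0; 0; 0; 0; 0; 0]; [:: 0; 0; 0; 0; 0; 0; 0; 0]; [:: 188; 0; 0; 0; 0; 0; 0; 0]]; [:: [:: 0; 0; 0; 0; 0; 0; 6; 0]; [:: 0; 0; 0; 0; 0; 0; 0; 0]; [:: 0; 0; 0; 0; 32; 0; 0; 0]; [:: 0; 0; 0; 0; 0; 0; 0; 0]; [:: 0; 0; 16; 0; 0; 0; 0; 0]; [:: 0; 0; 0; 0; 0; 0; 0; 0]; [:: 82; 0; 0; 0; 0; 0; 0; 0]; [:: 0; 0; 0; 0; 0; 0; 0; 0]]; [:: [:: 0; 0; 0; 0; 0; 0; 0; 0]; [:: 0; 0; 0; 0; 0; 0; 0; 0]; [:: 0;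 0; 0; 177; 0; 0; 0; 0]; [:: 0; 0; 75; 0; 0; 0; 0; 0]; [:: 0; 0; 0; 0; 0; 0; 0; 0]; [:: 0; 0; 0; 0; 0; 0; 0; 0]; [:: 0; 0; 0; 0; 0; 0; 0; 173]; [:: 0; 0; 0; 0; 0; 0; 123; 0]]; [:: [:: 0; 0; 0; 0; 0; 0; 0; 0]; [:: 0; 0; 0; 0; 0; 0; 0; 0]; [:: 0; 0; 0; 0; 0; 0; 0; 0]; [:: 0; 0; 0; 0; 0; 0; 0; 0]; [:: 0; 0; 0; 0; 0; 0; 0; 0]; [:: 0; 0; 0; 0; 0; 0; 0; 0]; [:: 0; 0; 0; 0; 0; 0; 0; 0]; [:: 0; 0; 0; 0; 0; 0; 0; 0]]; [:: [:: 0; 0; 0; 150; 0; 0; 0; 0]; [:: 0; 0; 0; 0; 0; 0; 0; 0]; [:: 0; 0; 0; 0; 0; 0; 0; 0]; [:: 120; 0; 0; 0; 0; 0; 0; 0]; [:: 0; 0; 0; 0; 0; 0; 0; 192]; [:: 0; 0; 0; 0; 0; 0; 0; 0]; [:: 0; 0; 0; 0; 0; 0; 0; 0]; [:: 0; 0; 0; 0; 105; 0; 0; 0]]; [:: [:: 0; 0; 21; 0; 0; 0; 0; 0]; [:: 0; 0; 0; 0; 0; 0; 0; 0]; [:: 27; 0; 0; 0; 0; 0; 0; 0]; [:: 0; 0; 0; 0; 0; 0; 0; 0]; [:: 0; 0; 0; 0; 0; 0; 51; 0]; [:: 0; 0; 0; 0; 0; 0; 0; 0]; [:: 0; 0; 0;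 0; 10; 0; 0; 0]; [:: 0; 0; 0; 0; 0; 0; 0; 0]]]; [:: [:: [:: 0; 0; 0; 0; 0; 0; 0; 0]; [:: 0; 0; 0; 0; 0; 0; 0; 25]; [:: 0; 0; 0; 0; 0; 0; 0; 0]; [:: 0; 0; 0; 0; 0; 98; 0; 0]; [:: 0; 0; 0; 0; 0; 0; 0; 0]; [:: 0; 0; 0; 55; 0; 0; 0; 0]; [:: 0; 0; 0; 0; 0; 0; 0; 0]; [:: 0; 152; 0; 0; 0; 0; 0; 0]]; [:: [:: 0; 0; 0; 0; 0; 0; 0; 126]; [:: 0; 0; 0; 0; 0; 0; 0; 0]; [:: 0; 0; 0; 0; 0; 0; 0; 0]; [:: 0; 0; 0; 0; 168; 0; 0; 0]; [:: 0; 0; 0; 64; 0; 0; 0; 0]; [:: 0; 0; 0; 0; 0; 0; 0; 0]; [:: 0; 0; 0; 0; 0; 0; 0; 0]; [:: 112; 0; 0; 0; 0; 0; 0; 0]]; [:: [:: 0; 0; 0; 0; 0; 0; 0; 0]; [:: 0; 0; 0; 0; 0; 0; 0; 0]; [:: 0; 0; 0; 0; 0; 0; 0; 0]; [:: 0; 0; 0; 0; 0; 0; 0; 0]; [:: 0; 0; 0; 0; 0; 0; 0; 0]; [:: 0; 0; 0; 0; 0; 0; 0; 0]; [:: 0; 0; 0; 0; 0; 0; 0; 0]; [:: 0; 0; 0; 0; 0; 0; 0; 0]]; [:: [:: 0; 0; 0; 0; 0; 57; 0; 0]; [:: 0; 0; 0; 0; 13; 0; 0; 0]; [:: 0; 0;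 0; 0; 0; 0; 0; 0]; [:: 0; 0; 0; 0; 0; 0; 0; 0]; [:: 0; 81; 0; 0; 0; 0; 0; 0]; [:: 30; 0; 0; 0; 0; 0; 0; 0]; [:: 0; 0; 0; 0; 0; 0; 0; 0]; [:: 0; 0; 0; 0; 0; 0; 0; 0]]; [:: [:: 0; 0; 0; 0; 0; 0; 0; 0]; [:: 0; 0; 0; 68; 0; 0; 0; 0]; [:: 0; 0; 0; 0; 0; 0; 0; 0]; [:: 0; 86; 0; 0; 0; 0; 0; 0]; [:: 0; 0; 0; 0; 0; 0; 0; 0]; [:: 0; 0; 0; 0; 0; 0; 0; 129]; [:: 0; 0; 0; 0; 0; 0; 0; 0]; [:: 0; 0; 0; 0; 0; 36; 0; 0]]; [:: [:: 0; 0; 0; 138; 0; 0; 0; 0]; [:: 0; 0; 0; 0; 0; 0; 0; 0]; [:: 0; 0; 0; 0; 0; 0; 0; 0]; [:: 94; 0; 0; 0; 0; 0; 0; 0]; [:: 0; 0; 0; 0; 0; 0; 0; 184]; [:: 0; 0; 0; 0; 0; 0; 0; 0]; [:: 0; 0; 0; 0; 0; 0; 0; 0]; [:: 0; 0; 0; 0; 46; 0; 0; 0]]; [:: [:: 0; 0; 0; 0; 0; 0; 0; 0]; [:: 0; 0; 0; 0; 0; 0; 0; 0]; [:: 0; 0; 0; 0; 0; 0; 0; 0]; [:: 0; 0; 0; 0; 0; 0; 0; 0]; [:: 0; 0; 0; 0; 0; 0; 0; 0]; [:: 0; 0; 0; 0; 0; 0; 0; 0]; [:: 0; 0; 0; 0;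 0; 0; 0; 0]; [:: 0; 0; 0; 0; 0; 0; 0; 0]]; [:: [:: 0; 49; 0; 0; 0; 0; 0; 0]; [:: 38; 0; 0; 0; 0; 0; 0; 0]; [:: 0; 0; 0; 0; 0; 0; 0; 0]; [:: 0; 0; 0; 0; 0; 0; 0; 0]; [:: 0; 0; 0; 0; 0; 19; 0; 0]; [:: 0; 0; 0; 0; 88; 0; 0; 0]; [:: 0; 0; 0; 0; 0; 0; 0; 0]; [:: 0; 0; 0; 0; 0; 0; 0; 0]]]; [:: [:: [:: 0; 0; 0; 0; 0; 0; 0; 0]; [:: 0; 0; 0; 0; 0; 0; 92; 0]; [:: 0; 0; 0; 0; 0; 166; 0; 0]; [:: 0; 0; 0; 0; 0; 0; 0; 0]; [:: 0; 0; 0; 0; 0; 0; 0; 0]; [:: 0; 0; 44; 0; 0; 0; 0; 0]; [:: 0; 108; 0; 0; 0; 0; 0; 0]; [:: 0; 0; 0; 0; 0; 0; 0; 0]]; [:: [:: 0; 0; 0; 0; 0; 0; 175; 0]; [:: 0; 0; 0; 0; 0; 0; 0; 0]; [:: 0; 0; 0; 0; 79; 0; 0; 0]; [:: 0; 0; 0; 0; 0; 0; 0; 0]; [:: 0; 0; 147; 0; 0; 0; 0; 0]; [:: 0; 0; 0; 0; 0; 0; 0; 0]; [:: 76; 0; 0; 0; 0; 0; 0; 0]; [:: 0; 0; 0; 0; 0; 0; 0; 0]]; [:: [:: 0; 0; 0; 0; 0; 84; 0; 0]; [:: 0; 0; 0; 0; 128; 0; 0; 0]; [:: 0; 0; 0;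 0; 0; 0; 0; 0]; [:: 0; 0; 0; 0; 0; 0; 0; 0]; [:: 0; 34; 0; 0; 0; 0; 0; 0]; [:: 66; 0; 0; 0; 0; 0; 0; 0]; [:: 0; 0; 0; 0; 0; 0; 0; 0]; [:: 0; 0; 0; 0; 0; 0; 0; 0]]; [:: [:: 0; 0; 0; 0; 0; 0; 0; 0]; [:: 0; 0; 0; 0; 0; 0; 0; 0]; [:: 0; 0; 0; 0; 0; 0; 0; 0]; [:: 0; 0; 0; 0; 0; 0; 0; 0]; [:: 0; 0; 0; 0; 0; 0; 0; 0]; [:: 0; 0; 0; 0; 0; 0; 0; 0]; [:: 0; 0; 0; 0; 0; 0; 0; 0]; [:: 0; 0; 0; 0; 0; 0; 0; 0]]; [:: [:: 0; 0; 0; 0; 0; 0; 0; 0]; [:: 0; 0; 135; 0; 0; 0; 0; 0]; [:: 0; 62; 0; 0; 0; 0; 0; 0]; [:: 0; 0; 0; 0; 0; 0; 0; 0]; [:: 0; 0; 0; 0; 0; 0; 0; 0]; [:: 0; 0; 0; 0; 0; 0; 110; 0]; [:: 0; 0; 0; 0; 0; 42; 0; 0]; [:: 0; 0; 0; 0; 0; 0; 0; 0]]; [:: [:: 0; 0; 104; 0; 0; 0; 0; 0]; [:: 0; 0; 0; 0; 0; 0; 0; 0]; [:: 151; 0; 0; 0; 0; 0; 0; 0]; [:: 0; 0; 0; 0; 0; 0; 0; 0]; [:: 0; 0; 0; 0; 0; 0; 73; 0]; [:: 0; 0; 0; 0; 0; 0; 0; 0]; [:: 0; 0; 0; 0; 149;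 0; 0; 0]; [:: 0; 0; 0; 0; 0; 0; 0; 0]]; [:: [:: 0; 96; 0; 0; 0; 0; 0; 0]; [:: 53; 0; 0; 0; 0; 0; 0; 0]; [:: 0; 0; 0; 0; 0; 0; 0; 0]; [:: 0; 0; 0; 0; 0; 0; 0; 0]; [:: 0; 0; 0; 0; 0; 124; 0; 0]; [:: 0; 0; 0; 0; 23; 0; 0; 0]; [:: 0; 0; 0; 0; 0; 0; 0; 0]; [:: 0; 0; 0; 0; 0; 0; 0; 0]]; [:: [:: 0; 0; 0; 0; 0; 0; 0; 0]; [:: 0; 0; 0; 0; 0; 0; 0; 0]; [:: 0; 0; 0; 0; 0; 0; 0; 0]; [:: 0; 0; 0; 0; 0; 0; 0; 0]; [:: 0; 0; 0; 0; 0; 0; 0; 0]; [:: 0; 0; 0; 0; 0; 0; 0; 0]; [:: 0; 0; 0; 0; 0; 0; 0; 0]; [:: 0; 0; 0; 0; 0; 0; 0; 0]]]].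
Fixpoint lall (T : Type) (p : T -> bool) (s : seq T) : bool :=
  if s is x :: s' then (if p x then lall p s' else false) else true.
Fixpoint lhas (T : Type) (p : T -> bool) (s : seq T) : bool :=
  if s is x :: s' then (if p x then true else lhas p s') else false.
Definition leaf (c : code) : nat :=
  match c with [:: a; b; x; d] => nth 0 (nth [::] (nth [::] (nth [::] Trie a) b) x) d | _ => 0 end.
Definition memG (c : code) := if leaf c is 0 then false else nth one Gl (leaf c).-1 == c.
Definition wordof (c : code) := nth [::] Wd (leaf c).-1.
Definition ext (a1 a2 : code) (c : code) := evalw a1 a2 (wordof c).
Definition edgeok (h : code -> code) :=
  lall (fun c => if h (cmul c g1) == cmul (h c) (h g1) then h (cmul c g2) == cmul (h c) (h g2) else false) Gl.
Definition Mu := ext m1 m2.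
Definition Rho := ext r1 r2.
Definition autok (A : code -> code) := if edgeok A then perm_eq (map A Gl) Gl else false.
Definition good (t : code * code * bool) (H : code -> code) :=
  let A := ext t.1.1 t.1.2 in
  if autok A then lall (fun c => A (H c) == (if t.2 then Rho else Mu) (A c)) Gl else false.
Definition cond (u v : code) :=
  let H := ext u v in
  if H (H (H g1)) == g1 then if H (H (H g2)) == g2 then if edgeok H then
  if lall (fun c => memG (H c)) Gl then if lall (fun c => H (H (H c)) == c) Gl then
  if lhas (fun c => H c != c) Gl then
     lall (fun w => lhas (fun c => cmul (H c) w != cmul w c) Gl) Gl
  else false else false else false else false else false else false.
Definition witok (u v : code) :=
  lhas (fun t => if (t.1.1 == u) then if (t.1.2 == v) then good t.2 (ext u v) else false else false) Tab.
Definition main_bool := lall (fun u => lall (fun v => if cond u v then witok u v else true) Gl) Gl.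

Lemma lallE (T : Type) (p : T -> bool) s : lall p s = all p s.
Proof. by elim: s => //= x s ->; case: (p x). Qed.
Lemma lhasE (T : Type) (p : T -> bool) s : lhas p s = has p s.
Proof. by elim: s => //= x s ->; case: (p x). Qed.

Lemma memG_Gl c : memG c -> c \in Gl.
Proof.
rewrite /memG; case: (leaf c) => // k /eqP <-.
case: (ltnP k (size Gl)) => h; first by rewrite mem_nth.
by rewrite nth_default.
Qed.

Lemma Gl_props_b : lall (fun c => (size c == 4) && lall (fun x => x < 8) c &&
   uniq [seq x %% 4 | x <- c] && ~~ odd (count (leq 4) c)) Gl = true.
Proof. by vm_compute. Qed.

Lemma Gl_size c : c \in Gl -> size c = 4.
Proof. by move=> h; move: Gl_props_b; rewrite lallE => /allP/(_ c h)/andP[/andP[/andP[/eqP]]]. Qed.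

Lemma Gl_closed_b : lall (fun c => lall (fun d => memG (cmul c d)) Gl) Gl = true.
Proof. by vm_compute. Qed.
Lemma Gl_closed c d : c \in Gl -> d \in Gl -> cmul c d \in Gl.
Proof.
move=> hc hd; apply: memG_Gl.
by move: Gl_closed_b; rewrite lallE => /allP/(_ c hc); rewrite lallE => /allP/(_ d hd).
Qed.

Lemma Gl_oner_b : lall (fun c => cmul c one == c) Gl = true.
Proof. by vm_compute. Qed.
Lemma cmul1 c : c \in Gl -> cmul c one = c.
Proof. by move=> hc; move: Gl_oner_b; rewrite lallE => /allP/(_ c hc)/eqP. Qed.

Lemma gen_b : lall (fun c => ext g1 g2 c == c) Gl = true.
Proof. by vm_compute. Qed.
Lemma gen_eq c : c \in Gl -> evalw g1 g2 (wordof c) = c.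
Proof. by move=> hc; move: gen_b; rewrite lallE => /allP/(_ c hc)/eqP. Qed.

Lemma wordof_one : wordof one = [::].
Proof. by vm_compute. Qed.

Lemma mems_b : [&& memG one, memG g1, memG g2, memG m1, memG m2, memG r1 & memG r2].
Proof. by vm_compute. Qed.
Lemma one_in : one \in Gl. Proof. by case/and5P: mems_b => /memG_Gl. Qed.
Lemma g1_in : g1 \in Gl. Proof. by case/and5P: mems_b => _ /memG_Gl. Qed.
Lemma g2_in : g2 \in Gl. Proof. by case/and5P: mems_b => _ _ /memG_Gl. Qed.
Lemma m1_in : m1 \in Gl. Proof. by case/and5P: mems_b => _ _ _ /memG_Gl. Qed.
Lemma m2_in : m2 \in Gl. Proof. by case/and5P: mems_b => _ _ _ _ /and3P[/memG_Gl]. Qed.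
Lemma r1_in : r1 \in Gl. Proof. by case/and5P: mems_b => _ _ _ _ /and3P[_ /memG_Gl]. Qed.
Lemma r2_in : r2 \in Gl. Proof. by case/and5P: mems_b => _ _ _ _ /and3P[_ _ /memG_Gl]. Qed.

Lemma idem_b : lall (fun c => (cmul c c == c) ==> (c == one)) Gl = true.
Proof. by vm_compute. Qed.
Lemma idem_one c : c \in Gl -> cmul c c = c -> c = one.
Proof. by move=> hc e; move: idem_b; rewrite lallE => /allP/(_ c hc); rewrite e eqxx => /eqP. Qed.

Lemma inv_b : lall (fun w => lhas (fun w' => cmul w w' == one) Gl) Gl = true.
Proof. by vm_compute. Qed.
Lemma inv_ex w : w \in Gl -> exists2 w', w' \in Gl & cmul w w' = one.
Proof.
move=> hw; move: inv_b; rewrite lallE => /allP/(_ w hw); rewrite lhasE => /hasP[w' h1 /eqP h2].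
by exists w'.
Qed.

Lemma valid_b : lall (fun a => lall (fun b => lall (fun c => lall (fun d =>
   (uniq [seq x %% 4 | x <- [:: a; b; c; d]] && ~~ odd (count (leq 4) [:: a; b; c; d]))
     ==> memG [:: a; b; c; d]) (iota 0 8)) (iota 0 8)) (iota 0 8)) (iota 0 8) = true.
Proof. by vm_compute. Qed.

Lemma valid_Gl c : size c = 4 -> all (fun x => x < 8) c ->
  uniq [seq x %% 4 | x <- c] -> ~~ odd (count (leq 4) c) -> c \in Gl.
Proof.
case: c => [|a [|b [|x [|d [|]]]]] // _ hall hu ho.
move: hall => /= /and4P[ha hb hx /andP[hd _]].
apply: memG_Gl.
move: valid_b; rewrite lallE => /allP/(_ a); rewrite mem_iota ha => /(_ isT).
rewrite lallE => /allP/(_ b); rewrite mem_iota hb => /(_ isT).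
rewrite lallE => /allP/(_ x); rewrite mem_iota hx => /(_ isT).
rewrite lallE => /allP/(_ d); rewrite mem_iota hd => /(_ isT).
by rewrite hu ho.
Qed.

Lemma size_cmul a b : size (cmul a b) = size a.
Proof. by rewrite size_map. Qed.
Lemma nth_cmul a b i : i < size a -> nth 0 (cmul a b) i = fm (nth 0 a i) b.
Proof. by move=> h; rewrite (nth_map 0). Qed.
Lemma fmE x b : fm x b = nth 0 b (x %% 4) %% 4 + 4 * ((4 <= x) (+) (4 <= nth 0 b (x %% 4))).
Proof. by []. Qed.
Lemma mod_aux q k : q < 4 -> (q + 4 * k) %% 4 = q.
Proof. by move=> h; rewrite addnC mulnC modnMDl modn_small. Qed.
Lemma sgn_aux q (k : bool) : q < 4 -> (4 <= q + 4 * k) = k.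
Proof. by case: k => h /=; lia. Qed.
Lemma fm_mod x b : fm x b %% 4 = nth 0 b (x %% 4) %% 4.
Proof. by rewrite fmE mod_aux // ltn_pmod. Qed.
Lemma fm_sgn x b : (4 <= fm x b) = (4 <= x) (+) (4 <= nth 0 b (x %% 4)).
Proof. by rewrite fmE sgn_aux // ltn_pmod. Qed.

Lemma cmulA a b c : size b = 4 -> cmul (cmul a b) c = cmul a (cmul b c).
Proof.
move=> sb; rewrite /cmul -map_comp; apply: eq_map => x /=.
rewrite [fm (fm x b) c]fmE fm_mod fm_sgn [fm x _]fmE nth_cmul; last by rewrite sb ltn_pmod.
by rewrite fm_mod fm_sgn addbA.
Qed.

Lemma size_evalw a1 a2 w : size (evalw a1 a2 w) = 4.
Proof.
elim/last_ind: w => [|w b IH] //.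
by rewrite /evalw foldl_rcons size_cmul.
Qed.

Lemma evalw_rcons a1 a2 w b : evalw a1 a2 (rcons w b) = cmul (evalw a1 a2 w) (gen a1 a2 b).
Proof. by rewrite /evalw foldl_rcons. Qed.

Lemma evalw_in a1 a2 w : a1 \in Gl -> a2 \in Gl -> evalw a1 a2 w \in Gl.
Proof.
move=> h1 h2; elim/last_ind: w => [|w b IH]; first exact: one_in.
by rewrite evalw_rcons Gl_closed //; case: b.
Qed.

Definition homG (h : code -> code) := forall c d, c \in Gl -> d \in Gl -> h (cmul c d) = cmul (h c) (h d).
Definition intoG (h : code -> code) := forall c, c \in Gl -> h c \in Gl.

Lemma edge_hom h : edgeok h -> intoG h -> h one = one -> homG h.
Proof.
rewrite /edgeok lallE => /allP He Hi H1 c d hc hd.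
rewrite -(gen_eq hd); elim/last_ind: (wordof d) => [|w b IH].
  by rewrite /= H1 !cmul1 // Hi.
have he := evalw_in w g1_in g2_in.
have hce := Gl_closed hc he.
rewrite evalw_rcons -cmulA ?size_evalw //.
have E1 : forall e, e \in Gl -> h (cmul e (gen g1 g2 b)) = cmul (h e) (h (gen g1 g2 b)).
  by move=> e /He /andP[/eqP ? /eqP ?]; case: b.
rewrite E1 // IH E1 // cmulA //.
by apply: Gl_size; apply: Hi.
Qed.

Lemma hom_one h : homG h -> intoG h -> h one = one.
Proof. by move=> Hh Hi; apply: idem_one; [apply: Hi; apply: one_in | rewrite -Hh ?cmul1 ?one_in]. Qed.

Lemma hom_ext h : homG h -> intoG h -> forall c, c \in Gl -> h c = ext (h g1) (h g2) c.
Proof.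
move=> Hh Hi c hc; rewrite {1}/ext -{1}(gen_eq hc).
elim/last_ind: (wordof c) => [|w b IH]; first exact: hom_one.
rewrite !evalw_rcons Hh ?IH //; first by case: b.
  exact: evalw_in g1_in g2_in.
by case: b; [apply: g2_in | apply: g1_in].
Qed.

Local Open Scope ring_scope.

Definition emb (R : numFieldType) (c : code) : 'M[R]_4 :=
  \matrix_(i, j) (if (nth 0 c i %% 4 == j)%N then sgnb R (4 <= nth 0 c i)%N else 0).

Lemma sgnbM (R : numFieldType) a b : sgnb R a * sgnb R b = sgnb R (a (+) b).
Proof. by case: a; case: b; rewrite /sgnb /= ?mulr1 ?mul1r ?mulrNN ?mulr1. Qed.

Lemma sgnb_inj (R : realFieldType) a b : sgnb R a = sgnb R b -> a = b.
Proof. by case: a; case: b => //; rewrite /sgnb => h; lra. Qed.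

Lemma sgnb_neq0 (R : realFieldType) a : sgnb R a != 0.
Proof. by case: a; rewrite /sgnb; apply/eqP; lra. Qed.

Lemma mu_orth (R : realFieldType) : muD4 R *m (muD4 R)^T = 1%:M.
Proof.
apply/matrixP => i j; rewrite !mxE !big_ord_recr big_ord0 /= !mxE.
case: i => [[|[|[|[|//]]]] ?]; case: j => [[|[|[|[|//]]]] ?]; rewrite /= ?mxE /=; lra.
Qed.


Lemma emb_mul (R : numFieldType) c d : size c = 4%N -> emb R c *m emb R d = emb R (cmul c d).
Proof.
move=> sc; apply/matrixP => i j; rewrite !mxE.
have hp : (nth 0 c i %% 4 < 4)%N by rewrite ltn_pmod.
rewrite (bigD1 (Ordinal hp)) //= big1 ?addr0; last first.
  move=> k hk; rewrite !mxE; case: ifP; rewrite ?mul0r //.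
  by move=> /eqP e; move: hk; rewrite -val_eqE /= e eqxx.
rewrite !mxE /= eqxx nth_cmul ?sc ?ltn_ord // fm_mod fm_sgn /=.
by case: ifP; rewrite ?mulr0 // sgnbM.
Qed.

Lemma nth_one (i : 'I_4) : nth 0 one i = i.
Proof. by case: i => [[|[|[|[|//]]]] ?]. Qed.

Lemma emb_one (R : numFieldType) : emb R one = 1%:M.
Proof.
apply/matrixP => i j; rewrite !mxE nth_one modn_small //.
have -> : (4 <= i)%N = false by case: i => [[|[|[|[|]]]] ?].
by rewrite val_eqE; case: (i == j).
Qed.

Lemma Gl_lt8 c i : c \in Gl -> (nth 0 c i < 8)%N.
Proof.
move=> hc; case: (ltnP i (size c)) => hi; last by rewrite nth_default.
move: Gl_props_b; rewrite lallE => /allP/(_ c hc)/andP[/andP[/andP[_]]].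
by rewrite lallE => /allP/(_ _ (mem_nth 0 hi)).
Qed.
Lemma Gl_uniq c : c \in Gl -> uniq [seq (x %% 4)%N | x <- c].
Proof. by move=> hc; move: Gl_props_b; rewrite lallE => /allP/(_ c hc)/andP[/andP[_]]. Qed.
Lemma Gl_even c : c \in Gl -> ~~ odd (count (leq 4) c).
Proof. by move=> hc; move: Gl_props_b; rewrite lallE => /allP/(_ c hc)/andP[_]. Qed.

Lemma prod_sgnb_seq (R : numFieldType) (l : seq nat) :
  \prod_(x <- l) sgnb R (4 <= x)%N = sgnb R (odd (count (leq 4) l)).
Proof.
elim: l => [|x l IH]; first by rewrite big_nil.
by rewrite big_cons IH sgnbM /= oddD oddb.
Qed.

Lemma prodc (R : numFieldType) c : size c = 4%N ->
  \prod_(i < 4) sgnb R (4 <= nth 0 c i)%N = sgnb R (odd (count (leq 4) c)).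
Proof.
move=> sc; rewrite -prod_sgnb_seq (@big_nth _ _ _ _ 0%N c) sc big_mkord.
by [].
Qed.

Lemma emb_inj (R : realFieldType) c d : c \in Gl -> d \in Gl -> emb R c = emb R d -> c = d.
Proof.
move=> hc hd E; apply: (@eq_from_nth _ 0); first by rewrite !Gl_size.
move=> i; rewrite Gl_size // => hi.
have hx := Gl_lt8 i hc; have hy := Gl_lt8 i hd.
have hp : (nth 0 c i %% 4 < 4)%N by rewrite ltn_pmod.
have := congr1 (fun M : 'M[R]_4 => M (Ordinal hi) (Ordinal hp)) E; rewrite !mxE /= eqxx.
case: ifP => [/eqP em | _]; last by move=> h; move: (sgnb_neq0 R (4 <= nth 0 c i)%N); rewrite h eqxx.
move/sgnb_inj; move: em hx hy; set x := nth 0 c i; set y := nth 0 d i => em hx hy.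
case: (leqP 4 x); case: (leqP 4 y) => //= h1 h2 _; lia.
Qed.

Lemma emb_inW (R : realFieldType) c : c \in Gl -> inWD4 (emb R c).
Proof.
move=> hc.
pose pf := fun i : 'I_4 => (inord (nth 0 c i %% 4)%N : 'I_4).
have inj : injective pf.
  move=> i j; rewrite /pf => /(congr1 (@nat_of_ord 4)); rewrite !inordK ?ltn_pmod // => e.
  apply: val_inj => /=; apply/eqP.
  have := nth_uniq 0 (s := [seq (x %% 4)%N | x <- c]) (i := i) (j := j).
  rewrite size_map Gl_size // !ltn_ord => /(_ isT isT (Gl_uniq hc)) <-.
  by rewrite !(nth_map 0) ?Gl_size ?ltn_ord // e.
exists [ffun i : 'I_4 => (4 <= nth 0 c i)%N]; exists (perm inj); split.
  rewrite (eq_bigr (fun i : 'I_4 => sgnb R (4 <= nth 0 c i)%N)); last by move=> i _; rewrite ffunE.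
  by rewrite prodc ?Gl_size // (negbTE (Gl_even hc)).
apply/matrixP => i j; rewrite mul_diag_mx perm_mxEsub !mxE permE ffunE /pf.
rewrite -val_eqE /= inordK ?ltn_pmod //.
by case: ifP; rewrite ?mulr1 ?mulr0.
Qed.

Lemma inW_emb (R : realFieldType) x : inWD4 x -> exists2 c, c \in Gl & x = emb R c.
Proof.
case=> s [p [hprod ->]].
set c := [seq ((p i : nat) + 4 * s i)%N | i <- enum 'I_4].
have nc : forall i : 'I_4, nth 0 c i = (p i + 4 * s i)%N.
  by move=> i; rewrite /c (nth_map ord0) ?size_enum_ord ?ltn_ord // nth_ord_enum.
have sc : size c = 4%N by rewrite size_map size_enum_ord.
have e1 : forall i : 'I_4, ((p i + 4 * s i) %% 4 = p i)%N by move=> i; rewrite mod_aux.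
have e2 : forall i : 'I_4, (4 <= p i + 4 * s i)%N = s i by move=> i; rewrite sgn_aux.
exists c.
  apply: valid_Gl => //.
  - apply/allP => y /mapP [i _ ->]; have := ltn_ord (p i); case: (s i) => /= h; lia.
  - rewrite -map_comp (eq_map (g := fun i => val (p i))); last by move=> i /=; rewrite e1.
    rewrite map_inj_uniq ?enum_uniq // => i j /val_inj; exact: perm_inj.
  - have := prodc R sc.
    rewrite (eq_bigr (fun i : 'I_4 => sgnb R (s i))); last by move=> i _; rewrite nc e2.
    by rewrite hprod => /esym; case: (odd _) => //; rewrite /sgnb => h; lra.
apply/matrixP => i j; rewrite mul_diag_mx perm_mxEsub !mxE nc e1 e2 -val_eqE /=.
by case: ifP; rewrite ?mulr1 ?mulr0.
Qed.

Definition dec (R : numFieldType) (x : 'M[R]_4) : code := nth one Gl (find (fun c => emb R c == x) Gl).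

Lemma dec_spec (R : realFieldType) c : c \in Gl -> dec (emb R c) \in Gl /\ emb R (dec (emb R c)) = emb R c.
Proof.
move=> hc; have hh : has (fun c' => emb R c' == emb R c) Gl by apply/hasP; exists c.
split; first by rewrite /dec mem_nth // -has_find.
exact: (eqP (nth_find one hh)).
Qed.

Lemma dec_emb (R : realFieldType) c : c \in Gl -> dec (emb R c) = c.
Proof. by move=> hc; case: (dec_spec R hc) => h1 h2; apply: emb_inj h2. Qed.

Lemma inW_dec (R : realFieldType) x : inWD4 x -> dec x \in Gl /\ emb R (dec x) = x.
Proof. by case/inW_emb => c hc ->; rewrite dec_emb. Qed.

Lemma rho_orth (R : realFieldType) : rhoD4 R *m (rhoD4 R)^T = 1%:M.
Proof.
apply/matrixP => i j; rewrite !mxE !big_ord_recr big_ord0 /= !mxE.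
case: i => [[|[|[|[|//]]]] ?]; case: j => [[|[|[|[|//]]]] ?]; rewrite /= ?mxE /=; lra.
Qed.

Ltac mxcomp := apply/matrixP => -[[|[|[|[|//]]]] ?] -[[|[|[|[|//]]]] ?];
  rewrite !mxE !big_ord_recr big_ord0 /= !mxE ?big_ord_recr ?big_ord0 /= ?mxE /sgnb /=; lra.

Lemma mu_g1 (R : realFieldType) : muD4 R *m emb R g1 *m (muD4 R)^T = emb R m1.
Proof. mxcomp. Qed.
Lemma mu_g2 (R : realFieldType) : muD4 R *m emb R g2 *m (muD4 R)^T = emb R m2.
Proof. mxcomp. Qed.
Lemma rho_g1 (R : realFieldType) : rhoD4 R *m emb R g1 *m (rhoD4 R)^T = emb R r1.
Proof. mxcomp. Qed.
Lemma rho_g2 (R : realFieldType) : rhoD4 R *m emb R g2 *m (rhoD4 R)^T = emb R r2.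
Proof. mxcomp. Qed.

Lemma main_check : main_bool = true.
Proof. vm_compute. reflexivity. Qed.

Lemma Gl_memG_b : lall memG Gl = true. Proof. by vm_compute. Qed.
Lemma Gl_memG c : c \in Gl -> memG c.
Proof. by move=> hc; move: Gl_memG_b; rewrite lallE => /allP/(_ c hc). Qed.
Lemma Gl_uniq_b : uniq Gl. Proof. by vm_compute. Qed.

Lemma orth_inv (R : realFieldType) (m : 'M[R]_4) : m *m m^T = 1%:M -> m \in unitmx /\ invmx m = m^T.
Proof.
move=> h; have [u _] := mulmx1_unit h; split => //.
by rewrite -[invmx m]mulmx1 -h mulmxA mulVmx ?mul1mx.
Qed.

Lemma inv_right (R : realFieldType) (m m' : 'M[R]_4) : m *m m' = 1%:M -> invmx m = m'.
Proof.
move=> h; have [u _] := mulmx1_unit h.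
by rewrite -[invmx m]mulmx1 -h mulmxA mulVmx ?mul1mx.
Qed.

Lemma conj_emb_ext (R : realFieldType) (m : 'M[R]_4) a1 a2 : m *m m^T = 1%:M ->
  m *m emb R g1 *m m^T = emb R a1 -> m *m emb R g2 *m m^T = emb R a2 ->
  forall c, c \in Gl -> emb R (ext a1 a2 c) = conjm m (emb R c).
Proof.
move=> h h1 h2 c hc; rewrite /conjm (orth_inv h).2.
have hTm : m^T *m m = 1%:M by apply: mulmx1C.
have key : forall X Y : 'M[R]_4, (m *m X *m m^T) *m (m *m Y *m m^T) = m *m (X *m Y) *m m^T.
  by move=> X Y; rewrite !mulmxA -(mulmxA _ m^T m) hTm mulmx1.
rewrite /ext -{2}(gen_eq hc); elim/last_ind: (wordof c) => [|w b IH].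
  by rewrite /= emb_one mulmx1 h.
rewrite !evalw_rcons -!emb_mul ?size_evalw // IH.
have -> : emb R (gen a1 a2 b) = m *m emb R (gen g1 g2 b) *m m^T by case: b.
by rewrite key.
Qed.

Lemma cond_of u v : let H := ext u v in
  H (H (H g1)) == g1 -> H (H (H g2)) == g2 -> edgeok H -> all (fun c => memG (H c)) Gl ->
  all (fun c => H (H (H c)) == c) Gl -> has (fun c => H c != c) Gl ->
  all (fun w => lhas (fun c => cmul (H c) w != cmul w c) Gl) Gl -> cond u v.
Proof.
move=> H h1 h2 h3 h4 h5 h6 h7.
by rewrite /cond -/H h1 h2 h3 lallE h4 lallE h5 lhasE h6 lallE h7.
Qed.

Theorem proposition5p3 (R : realFieldType) (f : 'M[R]_4 -> 'M[R]_4) :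
  trialitarian f ->
  conj_in_Aut f (conjm (muD4 R)) \/ conj_in_Aut f (conjm (rhoD4 R)).
Proof.
move=> [[fW fM fI fS] f3 fnid fninn].
pose F c := dec (f (emb R c)).
have FG : intoG F by move=> c hc; exact: (inW_dec (fW _ (emb_inW R hc))).1.
have embF : forall c, c \in Gl -> emb R (F c) = f (emb R c).
  by move=> c hc; exact: (inW_dec (fW _ (emb_inW R hc))).2.
have Fhom : homG F.
  move=> c d hc hd; rewrite {1}/F -emb_mul ?Gl_size // (fM _ _ (emb_inW R hc) (emb_inW R hd)) -!embF //.
  by rewrite emb_mul ?Gl_size ?FG // dec_emb // Gl_closed // FG.
have F3 : forall c, c \in Gl -> F (F (F c)) = c.
  move=> c hc; apply: (emb_inj (R := R)); rewrite ?FG //.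
  by rewrite !embF ?FG // (f3 _ (emb_inW R hc)).
pose u := F g1; pose v := F g2.
have uG : u \in Gl by apply: FG; apply: g1_in.
have vG : v \in Gl by apply: FG; apply: g2_in.
have HF : forall c, c \in Gl -> F c = ext u v c by move=> c hc; apply: hom_ext.
have hcond : cond u v.
  apply: cond_of.
  - by rewrite -(HF _ g1_in) -(HF _ (FG _ g1_in)) -(HF _ (FG _ (FG _ g1_in))) (F3 _ g1_in).
  - by rewrite -(HF _ g2_in) -(HF _ (FG _ g2_in)) -(HF _ (FG _ (FG _ g2_in))) (F3 _ g2_in).
  - rewrite /edgeok lallE; apply/allP => c hc.
    have E : forall g, g \in Gl -> ext u v (cmul c g) == cmul (ext u v c) (ext u v g).
      by move=> g hg; rewrite -(HF _ hc) -(HF _ hg) -(HF _ (Gl_closed hc hg)) (Fhom _ _ hc hg).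
    by rewrite (E _ g1_in) (E _ g2_in).
  - by apply/allP => c hc; rewrite -(HF _ hc); apply: Gl_memG; apply: FG.
  - by apply/allP => c hc; rewrite -(HF _ hc) -(HF _ (FG _ hc)) -(HF _ (FG _ (FG _ hc))) (F3 _ hc).
  - apply/negPn/negP => /hasPn hn; apply: fnid => x /inW_emb [c hc ->].
    by rewrite -(embF _ hc); move: (hn c hc); rewrite -(HF _ hc) negbK => /eqP ->.
  - apply/allP => w hw; rewrite lhasE; apply/negPn/negP => /hasPn hn; apply: fninn.
    exists (emb R w); first exact: emb_inW.
    have [w' hw' ww'] := inv_ex hw.
    have E1 : emb R w *m emb R w' = 1%:M by rewrite emb_mul ?Gl_size // ww' emb_one.
    rewrite (inv_right E1) => x /inW_emb [c hc ->].
    rewrite -(embF _ hc) -[emb R (F c)]mulmx1 -E1 mulmxA (emb_mul R _ (Gl_size (FG _ hc))).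
    move: (hn c hc); rewrite -(HF _ hc) negbK => /eqP ->.
    by rewrite (emb_mul R _ (Gl_size hw)).
move: main_check; rewrite /main_bool lallE => /allP/(_ u uG); rewrite lallE => /allP/(_ v vG).
rewrite hcond /witok lhasE => /hasP [[[u' v'] [[a1 a2] b]] _] /=.
case: ifP => // _; case: ifP => // _; rewrite /good.
set A := ext a1 a2.
case: ifP => // hA hcomm; move: hA; rewrite /autok; case: ifP => // hedge hperm.
have AG : intoG A by move=> c hc; rewrite -(perm_mem hperm); apply: map_f.
have A1 : A one = one by rewrite /A /ext wordof_one.
have Ahom : homG A by apply: edge_hom.
have Ainj : {in Gl &, injective A}.
  move=> x y hx hy e.
  have hu : uniq (map A Gl) by rewrite (perm_uniq hperm) Gl_uniq_b.
  have := nth_uniq one (s := map A Gl) (i := index x Gl) (j := index y Gl).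
  rewrite size_map !index_mem hx hy => /(_ isT isT hu).
  rewrite !(nth_map one) ?index_mem ?hx ?hy // !nth_index ?hx ?hy // e eqxx => /esym/eqP ei.
  by rewrite -(nth_index one hx) ei nth_index.
have Asurj : forall y, y \in Gl -> exists2 c, c \in Gl & A c = y.
  by move=> y hy; move: hy; rewrite -(perm_mem hperm) => /mapP [c hc ->]; exists c.
pose a (x : 'M[R]_4) := emb R (A (dec x)).
have aut : autWD4 a.
  split.
  - by move=> x hx; apply: emb_inW; apply: AG; exact: (inW_dec hx).1.
  - move=> x y hx hy; have [dxG dxE] := inW_dec hx; have [dyG dyE] := inW_dec hy.
    have E : dec (x *m y) = cmul (dec x) (dec y).
      by rewrite -{1}dxE -{1}dyE (emb_mul R _ (Gl_size dxG)) (dec_emb R (Gl_closed dxG dyG)).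
    by rewrite /a E (Ahom _ _ dxG dyG) (emb_mul R _ (Gl_size (AG _ dxG))).
  - move=> x y hx hy; have [dxG dxE] := inW_dec hx; have [dyG dyE] := inW_dec hy.
    move=> E; have := emb_inj (AG _ dxG) (AG _ dyG) E => /Ainj => /(_ dxG dyG) e.
    by rewrite -dxE -dyE e.
  - move=> y hy; have [dyG dyE] := inW_dec hy; have [c hc hAc] := Asurj _ dyG.
    by exists (emb R c); [apply: emb_inW | rewrite /a (dec_emb R hc) hAc].
have comm : forall x, inWD4 x -> a (f x) = emb R ((if b then Rho else Mu) (A (dec x))).
  move=> x hx; have [dxG dxE] := inW_dec hx.
  rewrite /a -{1}dxE -(embF _ dxG) (dec_emb R (FG _ dxG)) (HF _ dxG).
  by move: hcomm; rewrite lallE => /allP/(_ _ dxG)/eqP ->.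
case: b comm hcomm => comm _; [right | left]; exists a; split => // x hx;
  rewrite (comm _ hx); have [dxG _] := inW_dec hx.
- by rewrite /Rho; apply: conj_emb_ext; [exact: rho_orth | exact: rho_g1 | exact: rho_g2 | exact: AG].
- by rewrite /Mu; apply: conj_emb_ext; [exact: mu_orth | exact: mu_g1 | exact: mu_g2 | exact: AG].
Qed.
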